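(* Let $\pi=(d_1\le\cdots\le d_n)$ be a graphical sequence and let $g(\pi)=\max\{i\in\mathbb{Z}^+ : f(i)<\infty\}$, with $f$ as defined in the context. Then there is a graphical sequence $\pi'$ of length $n$ with $\pi'\le\pi$ termwise which has a realization that is a disjoint union of exactly $g(\pi)$ cliques (so this realization has independence number $g(\pi)$). Consequently, for any integer $k>g(\pi)$, $\pi$ is minorized by a graphical sequence having a realization with independence number less than $k$.
   Context: Graphs are finite and simple; a graphical sequence is a nondecreasing integer sequence that is the degree sequence of some graph. Define $f:\mathbb{Z}^+\to\{d_1,\dots,d_n,\infty\}$ recursively, tracking an index: $f(1)=d_1$ (with index $j_1=1$); if $f(i)=d_{j_i}$ is finite then, if $j_i+f(i)+1\le n$, set $j_{i+1}=j_i+f(i)+1$ and $f(i+1)=d_{j_{i+1}}$, and otherwise $f(i+1)=\infty$; if $f(i)=\infty$ then $f(i+1)=\infty$. *)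

(* Defs.v *)
From mathcomp Require Import all_boot.
Set Implicit Arguments. Unset Strict Implicit.
 Unset Printing Implicit Defensive.

Definition simple_graph (n : nat) (e : rel 'I_n) : Prop :=
  (forall u v, e u v = e v u) /\ (forall u, ~~ e u u).

Definition deg (n : nat) (e : rel 'I_n) (u : 'I_n) : nat := #|[set v | e u v]|.

(* e is a realization of d (vertex i has degree d_(i+1), 0-based nth). *)
Definition realizes (d : seq nat) (e : rel 'I_(size d)) : Prop :=
  simple_graph e /\ forall i : 'I_(size d), deg e i = nth 0 d i.
Arguments realizes : clear implicits.

Definition graphical (d : seq nat) : Prop :=
  sorted leq d /\ exists e : rel 'I_(size d), realizes d e.

(* The recursion of the paper, with 1-based indices j_i; None encodes infinity. *)
Definition jstep (d : seq nat) (oj : option nat) : option nat :=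
  match oj with
  | Some j => if j + nth 0 d j.-1 + 1 <= size d
              then Some (j + nth 0 d j.-1 + 1) else None
  | None => None
  end.

Definition jidx (d : seq nat) (i : nat) : option nat := iter i.-1 (jstep d) (Some 1).

Definition f_seq (d : seq nat) (i : nat) : option nat :=
  omap (fun j => nth 0 d j.-1) (jidx d i).

Definition union_of_cliques (n g : nat) (e : rel 'I_n) : Prop :=
  exists c : 'I_n -> 'I_g,
    (forall k : 'I_g, exists u, c u = k) /\
    (forall u v, e u v = (u != v) && (c u == c v)).

Definition independent (n : nat) (e : rel 'I_n) (S : {set 'I_n}) : bool :=
  [forall u in S, forall v in S, ~~ e u v].

Definition independence_number (n : nat) (e : rel 'I_n) : nat :=
  \max_(S : {set 'I_n} | independent e S) #|S|.

(* Main.v *)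
Require Import Defs.
From mathcomp Require Import all_boot zify.

Lemma iter_jstep_None d i : iter i (jstep d) None = None.
Proof. by elim: i => //= i ->. Qed.

Lemma jstep_shift d m i j : 0 < j ->
  iter i (jstep d) (Some (j + m)) = omap (addn m) (iter i (jstep (drop m d)) (Some j)).
Proof.
elim: i j => [|i IH] j j0; first by rewrite /= addnC.
rewrite !iterSr /=.
have -> : (j + m).-1 = m + j.-1 by lia.
rewrite -nth_drop size_drop.
case: ifP => H1; case: ifP => H2.
- have -> : j + m + nth 0 (drop m d) j.-1 + 1 = (j + nth 0 (drop m d) j.-1 + 1) + m by lia.
  by apply: IH; lia.
- lia.
- lia.
- by rewrite !iter_jstep_None.
Qed.

Lemma jstep_first d i : iter i.+1 (jstep d) (Some 1) =
  if (nth 0 d 0).+2 <= size d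
  then omap (addn (nth 0 d 0).+1) (iter i (jstep (drop (nth 0 d 0).+1 d)) (Some 1))
  else None.
Proof.
rewrite iterSr /=.
have -> : 1 + nth 0 d 0 + 1 = 1 + (nth 0 d 0).+1 by lia.
case: ifP => H; first by rewrite jstep_shift.
by rewrite iter_jstep_None.
Qed.

Lemma lemA g : forall d, 0 < size d -> sorted leq d ->
  iter g (jstep d) (Some 1) <> None -> iter g.+1 (jstep d) (Some 1) = None ->
  exists c : nat -> nat, [/\ forall p, p < size d -> c p <= g,
    forall k, k <= g -> exists2 p, p < size d & c p = k &
    forall u, u < size d -> count (fun v => c v == c u) (iota 0 (size d)) <= (nth 0 d u).+1].
Proof.
elim: g => [|g IH] d n0 sd H1 H2.
  exists (fun _ => 0); split => //.
  - by move=> k; rewrite leqn0 => /eqP ->; exists 0.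
  - move=> u un.
    move: H2; rewrite jstep_first; case: ifP => // H _.
    rewrite (eq_count (a2 := predT)) // count_predT size_iota.
    have : nth 0 d 0 <= nth 0 d u by apply: (sorted_leq_nth leq_trans leqnn) => //; rewrite inE.
    lia.
rewrite jstep_first in H1; rewrite jstep_first in H2; move: H1 H2.
set m := (nth 0 d 0).+1.
case: ifP => // Hm H1 H2.
have {}H1 : iter g (jstep (drop m d)) (Some 1) <> None by move: H1; case: (iter g (jstep (drop m d)) (Some 1)).
have {}H2 : iter g.+1 (jstep (drop m d)) (Some 1) = None by move: H2; case: (iter g.+1 (jstep (drop m d)) (Some 1)).
have [c2 [B S C]] := IH (drop m d) ltac:(rewrite size_drop; lia)
   (subseq_sorted leq_trans (drop_subseq _ _) sd) H1 H2.
rewrite size_drop in B S C.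
exists (fun p => if p < m then 0 else (c2 (p - m)).+1); split.
- move=> p pn; case: ifP => // pm; have := B (p - m); lia.
- case=> [|k] Hk; first by exists 0 => //; rewrite /m.
  have [p pn Hp] := S k Hk.
  exists (p + m); first lia.
  by rewrite ifF ?addnK ?Hp //; lia.
- move=> u un.
  have -> : size d = m + (size d - m) by lia.
  rewrite iotaD count_cat [0 + m]addnC iotaDl count_map.
  case: ifP => um.
  + rewrite (eq_in_count (a2 := predT)); last first.
      by move=> v; rewrite mem_iota => /andP [_ vm]; rewrite /= vm.
    rewrite count_predT size_iota (eq_count (a2 := pred0)); last first.
      by move=> v /=; rewrite ifF //; lia.
    rewrite count_pred0 addn0.
    have : nth 0 d 0 <= nth 0 d u by apply: (sorted_leq_nth leq_trans leqnn) => //; rewrite inE; lia.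
    rewrite /m; lia.
  + rewrite (eq_in_count (a2 := pred0)); last first.
      by move=> v; rewrite mem_iota => /andP [_ vm]; rewrite /= vm.
    rewrite count_pred0 add0n.
    rewrite (eq_count (a2 := fun v => c2 v == c2 (u - m))); last first.
      by move=> v /=; rewrite ifF ?addKn //; lia.
    have := C (u - m) ltac:(lia).
    by rewrite nth_drop subnKC //; lia.
Qed.

Lemma count_nth (P : pred nat) s : count P s = count (fun q => P (nth 0 s q)) (iota 0 (size s)).
Proof. by rewrite -{1}(mkseq_nth 0 s) /mkseq count_map. Qed.

Lemma card_ord_count N (P : pred nat) : #|[set v : 'I_N | P v]| = count P (iota 0 N).
Proof. rewrite -val_enum_ord count_map cardsE cardE /enum_mem.
by rewrite size_filter (@eq_filter _ _ predT) ?filter_predT.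
Qed.

Lemma sort_le (cs d : seq nat) : size cs = size d -> sorted leq d ->
  (forall i, i < size d -> nth 0 cs i <= nth 0 d i) ->
  forall i, i < size d -> nth 0 (sort leq cs) i <= nth 0 d i.
Proof.
move=> sz sd le i ilt; set x := nth 0 d i.
rewrite leqNgt; apply/negP => Hgt.
have P : perm_eq (sort leq cs) cs by rewrite perm_sort perm_refl.
have L : i.+1 <= count (fun y => y <= x) cs.
  rewrite count_nth sz.
  have -> : size d = i.+1 + (size d - i.+1) by lia.
  rewrite iotaD count_cat (eq_in_count (a2 := predT)); last first.
    move=> q; rewrite mem_iota => /andP [_ qi] /=.
    apply: (leq_trans (le q _)); first lia.
    by apply: (sorted_leq_nth leq_trans leqnn) => //; rewrite inE; lia.
  by rewrite count_predT size_iota leq_addr.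
have U : count (fun y => y <= x) (sort leq cs) <= i.
  rewrite count_nth size_sort sz.
  have -> : size d = i + (size d - i) by lia.
  rewrite iotaD count_cat (eq_in_count (a1 := fun q => _ <= x) (a2 := pred0) (s := iota (0 + i) _)); last first.
    move=> q; rewrite mem_iota => /andP [iq qn] /=.
    apply/negbTE; rewrite -ltnNge; apply: (leq_trans Hgt).
    apply: (sorted_leq_nth leq_trans leqnn 0 (sort_sorted leq_total cs)); rewrite ?inE ?size_sort; lia.
  rewrite count_pred0 addn0.
  by apply: leq_trans (count_size _ _) _; rewrite size_iota.
move: L; rewrite -(permP P) => L.
by have := leq_trans L U; rewrite ltnn.
Qed.

Lemma indep_le n G (e : rel 'I_n) : union_of_cliques G e -> independence_number e <= G.
Proof.
case=> c [_ Hc]; apply/bigmax_leqP => S /forallP HS.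
rewrite -[G]card_ord; apply: (leq_card_in c) => u v uS vS cuv.
case: (eqVneq u v) => // neq.
by move: (HS u); rewrite uS /= => /forallP /(_ v); rewrite vS /= Hc neq cuv eqxx.
Qed.

Theorem mainTheorem8 (d : seq nat) (g : nat) :
  0 < size d ->
  graphical d ->
  (* g = g(pi) = max { i >= 1 : f(i) < infinity } *)
  0 < g -> f_seq d g <> None ->
  (forall i, 0 < i -> f_seq d i <> None -> i <= g) ->
  (exists d' : seq nat,
     [/\ size d' = size d, graphical d',
         (forall i, i < size d -> nth 0 d' i <= nth 0 d i) &
         exists e : rel 'I_(size d'), realizes d' e /\ union_of_cliques g e])
  /\
  (forall k, g < k ->
     exists d' : seq nat,
       [/\ size d' = size d, graphical d',
           (forall i, i < size d -> nth 0 d' i <= nth 0 d i) &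
           exists e : rel 'I_(size d'), realizes d' e /\ independence_number e < k]).
Proof.
move=> n0 gd g0; case: g g0 => // g _ fg gmax.
have jg : iter g (jstep d) (Some 1) <> None.
  by move: fg; rewrite /f_seq /jidx /=; case: (iter g (jstep d) (Some 1)).
have jg1 : iter g.+1 (jstep d) (Some 1) = None.
  case E: (iter g.+1 (jstep d) (Some 1)) => [a|] //.
  have := gmax g.+2 isT; rewrite /f_seq /jidx /= -/(iter g.+1 (jstep d) (Some 1)) E.
  by move=> /(_ ltac:(discriminate)); rewrite ltnn.
have sd := gd.1.
have [c [B S C]] := lemA g d n0 sd jg jg1.
set n := size d.
set cs := mkseq (fun u => (count (fun v => c v == c u) (iota 0 n)).-1) n.
have szcs : size cs = n by rewrite size_mkseq.
set d' := sort leq cs.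
have sz : size d' = n by rewrite size_sort.
have P : perm_eq d' cs by rewrite perm_sort perm_refl.
have [Is PIs Ed'] := perm_iotaP 0 P.
rewrite szcs in PIs.
have szIs : size Is = n by rewrite (perm_size PIs) size_iota.
set s := nth 0 Is.
have sB : forall u, u < n -> s u < n.
  move=> u un; have : s u \in Is by apply: mem_nth; rewrite szIs.
  by rewrite (perm_mem PIs) mem_iota.
have nd' : forall u, u < n -> nth 0 d' u = nth 0 cs (s u).
  by move=> u un; rewrite Ed' (nth_map 0) // szIs.
have ncs : forall p, p < n -> nth 0 cs p = (count (fun v => c v == c p) (iota 0 n)).-1.
  by move=> p pn; rewrite nth_mkseq.
pose c' := fun u : 'I_(size d') => (inord (c (s u)) : 'I_g.+1).
have c'E : forall u v, (c' u == c' v) = (c (s u) == c (s v)).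
  move=> u v.
  have bu : c (s u) < g.+1 by rewrite ltnS B // sB // -sz.
  have bv : c (s v) < g.+1 by rewrite ltnS B // sB // -sz.
  apply/eqP/eqP => [/(congr1 val)|H]; first by rewrite /= !inordK.
  by rewrite /c' H.
pose e' := fun u v : 'I_(size d') => (u != v) && (c' u == c' v).
have real : realizes d' e'.
  split; first split.
  - by move=> u v; rewrite /e' eq_sym [c' u == _]eq_sym.
  - by move=> u; rewrite /e' eqxx.
  move=> u; rewrite /deg.
  have -> : [set v | e' u v] = [set v | c' v == c' u] :\ u.
    by apply/setP => v; rewrite !inE /e' eq_sym [c' u == _]eq_sym.
  have -> : #|[set v | c' v == c' u] :\ u| = #|[set v | c' v == c' u]|.-1.
    by rewrite [in RHS](cardsD1 u [set v | c' v == c' u]) inE eqxx add1n.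
  have -> : [set v | c' v == c' u] = [set v : 'I_(size d') | (fun w : nat => c (s w) == c (s u)) v].
    by apply/setP => v; rewrite !inE c'E.
  have un : u < n by rewrite -sz.
  rewrite (card_ord_count (size d') (fun w => c (s w) == c (s u))).
  have -> : iota 0 (size d') = iota 0 n by rewrite sz.
  rewrite -(count_map s (fun w => c w == c (s u))).
  have -> : map s (iota 0 n) = Is by rewrite -szIs -/(mkseq _ _) mkseq_nth.
  by rewrite (permP PIs) nd' // ncs ?sB.
have surj : forall k : 'I_g.+1, exists u, c' u = k.
  move=> k; have [p pn cp] := S k (leq_trans (ltn_ord k) (leqnn _)).
  have pI : p \in Is by rewrite (perm_mem PIs) mem_iota.
  have iI : index p Is < size d' by rewrite sz -szIs index_mem.
  exists (Ordinal iI); apply: val_inj; rewrite /c' /= /s nth_index // cp inordK //.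
have uc : union_of_cliques g.+1 e' by exists c'; split.
have le : forall i, i < size d -> nth 0 d' i <= nth 0 d i.
  apply: sort_le => //.
  move=> i ilt; rewrite ncs // -subn1 leq_subLR add1n; exact: C.
have gd' : graphical d' by split; [exact: (sort_sorted leq_total cs) | exists e'].
split.
  by exists d'; split => //; exists e'.
move=> k gk; exists d'; split => //; exists e'; split => //.
exact: leq_ltn_trans (indep_le _ _ _ uc) gk.
Qed.
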